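(* For every $n\ge 10$ there exist a set $S$ of pairwise non-isomorphic graphs, each with at most $n$ vertices, a concept $c:S\to\{0,1\}$, and a graph $F$ such that, with $\mathcal{F}=\{F\}$: (1) the graphs in $S$ are pairwise distinguished by $1$-WL after one round; (2) for every $T\ge 0$, the sample $\{(\overline{\phi^{(T)}_{\mathsf{WL}}}(G),c(G)):G\in S\}$ is not linearly separable; (3) for every $T\ge 0$, the sample $\{(\overline{\phi^{(T)}_{\mathsf{WL},\mathcal{F}}}(G),c(G)):G\in S\}$ is linearly separable. Moreover, (2) and (3) also hold with the unnormalised feature vectors $\phi^{(T)}_{\mathsf{WL}}$ and $\phi^{(T)}_{\mathsf{WL},\mathcal{F}}$.
   Context: Graphs are finite, simple, undirected, unlabeled. $1$-WL: $C^1_0$ constant, $C^1_t(v)=\mathsf{RELABEL}(C^1_{t-1}(v),\{\!\{C^1_{t-1}(u):u\in N(v)\}\!\})$ with a fixed injective $\mathsf{RELABEL}$ shared by all graphs; $1$-WL distinguishes two graphs after one round if for some round $s\le1$ some colour occurs a different number of times in them. $1$-WL$_{\mathcal{F}}$: same update with initial colour $(\ell_F(v))_{F\in\mathcal{F}}$, where $\ell_F(v)=1$ if $v$ lies in a vertex set $X$ with induced subgraph $G[X]$ isomorphic to $F$, else $0$. $\phi_t(G)$ (resp. $\phi_{\mathcal{F},t}(G)$) counts the vertices of $G$ of each colour occurring at round $t$ among the graphs of $S$; $\phi^{(T)}_{\mathsf{WL}}(G)=[\phi_0(G),\dots,\phi_T(G)]$, $\phi^{(T)}_{\mathsf{WL},\mathcal{F}}(G)=[\phi_{\mathcal{F},0}(G),\dots,\phi_{\mathcal{F},T}(G)]$;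 a bar denotes normalisation to unit Euclidean norm. A labelled set of vectors is linearly separable if there are $\mathbf{w},b$ with $\mathbf{w}^\top\mathbf{x}+b>0$ for label $1$ and $<0$ for label $0$. *)

(* Defs.v *)
From HB Require Import structures.
From mathcomp Require Import all_boot all_order all_algebra.
From mathcomp Require Import reals.
Set Implicit Arguments. Unset Strict Implicit. Unset Printing Implicit Defensive.
Import Order.TTheory GRing.Theory Num.Theory.

Record graph := Graph {
  gn : nat;
  gadj : rel 'I_gn;
  gsym : symmetric gadj;
  girr : irreflexive gadj }.
Arguments gadj : clear implicits.

Definition iso (G H : graph) : Prop :=
  exists f : 'I_(gn G) -> 'I_(gn H),
    bijective f /\ forall a b, gadj G a b = gadj H (f a) (f b).

(* l_F(v) = 1 iff v lies in a vertex set X with G[X] isomorphic to F,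
   i.e. iff there is an embedding of F onto an induced subgraph of G
   whose image contains v. *)
Definition ellF (F G : graph) (v : 'I_(gn G)) : bool :=
  [exists f : {ffun 'I_(gn F) -> 'I_(gn G)},
     [&& injectiveb f, v \in codom f &
         [forall a, forall b, gadj F a b == gadj G (f a) (f b)]]].
Arguments ellF : clear implicits.

Definition nbrs (G : graph) (v : 'I_(gn G)) : seq 'I_(gn G) :=
  [seq u <- enum 'I_(gn G) | gadj G v u].

Definition init_col := forall G : graph, 'I_(gn G) -> nat.

Definition init_WL : init_col := fun _ _ => 0%N.

Definition init_WLF (Fs : seq graph) : init_col :=
  fun G v => pickle [seq ellF F G v | F <- Fs].

(* 1-WL colour refinement.  RELABEL is the fixed injective map
   (c, multiset M) |-> pickle (c, sorted list of M), shared by all graphs. *)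
Fixpoint wlcol (init : init_col) (G : graph) (t : nat) : 'I_(gn G) -> nat :=
  match t with
  | 0 => init G
  | t'.+1 => fun v =>
      pickle (@wlcol init G t' v,
              sort leq [seq @wlcol init G t' u | u <- nbrs v])
  end.
Arguments wlcol : clear implicits.

Definition cnt (init : init_col) (G : graph) (t col : nat) : nat :=
  #|[pred v : 'I_(gn G) | wlcol init G t v == col]|.

Definition wl_dist1 (G H : graph) : Prop :=
  exists s col, (s <= 1)%N /\ cnt init_WL G s col <> cnt init_WL H s col.

Definition colors (init : init_col) (S : seq graph) (t : nat) : seq nat :=
  undup (flatten [seq [seq wlcol init G t v | v <- enum 'I_(gn G)] | G <- S]).

Section Features.
Variable R : realType.
Local Open Scope ring_scope.

Definition phi (init : init_col) (S : seq graph) (t : nat) (G : graph) : seq R :=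
  [seq (cnt init G t col)%:R | col <- colors init S t].

Definition phiT (init : init_col) (S : seq graph) (T : nat) (G : graph) : seq R :=
  flatten [seq phi init S t G | t <- iota 0 T.+1].

Definition enorm (x : seq R) : R := Num.sqrt (\sum_(a <- x) a ^+ 2).

Definition normalize (x : seq R) : seq R := [seq a / enorm x | a <- x].

Definition dot (w x : seq R) : R := \sum_(i < size x) w`_i * x`_i.

Definition linsep (X : seq (seq R * bool)) : Prop :=
  exists (w : seq R) (b : R), forall p, p \in X ->
    if p.2 then 0 < dot w p.1 + b else dot w p.1 + b < 0.

Definition sample (feat : graph -> seq R) (S : seq graph) (c : graph -> bool)
  : seq (seq R * bool) := [seq (feat G, c G) | G <- S].

End Features.

(* Main.v *)
Require Import Defs.
From HB Require Import structures.
From mathcomp Require Import all_boot all_order all_algebra.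
From mathcomp Require Import reals.
From mathcomp Require Import lra zify.
Set Implicit Arguments. Unset Strict Implicit. Unset Printing Implicit Defensive.
Import Order.TTheory GRing.Theory Num.Theory.

Fixpoint fcol (c0 d t : nat) : nat :=
  match t with 0 => c0 | t'.+1 => pickle (fcol c0 d t', nseq d (fcol c0 d t')) end.

Lemma sorted_nseq d x : sorted leq (nseq d x).
Proof. by elim: d => [|[|d] IH] //= ; rewrite leqnn. Qed.

Lemma map_cst (T U : Type) (s : seq T) (x : U) : [seq x | _ <- s] = nseq (size s) x.
Proof. by elim: s => //= a s ->. Qed.

Lemma const_col init G c0 d :
  (forall v, init G v = c0) -> (forall v, size (@nbrs G v) = d) ->
  forall t v, wlcol init G t v = fcol c0 d t.
Proof.
move=> H0 Hd; elim=> [|t IH] v /=; first exact: H0.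
by rewrite IH (eq_map (g := fun _ => fcol c0 d t)) // map_cst Hd sorted_sort //; [exact: leq_trans | exact: sorted_nseq].
Qed.

Lemma fcol_inj d t c c' : fcol c d t = fcol c' d t -> c = c'.
Proof.
elim: t => //= t IH /(pcan_inj pickleK) [] /IH //.
Qed.

Lemma map_enum_cst G (g : 'I_(gn G) -> nat) x : (forall v, g v = x) ->
  [seq g v | v <- enum 'I_(gn G)] = nseq (gn G) x.
Proof. by move=> H; rewrite (eq_map H) map_cst size_enum_ord. Qed.

Lemma iso_gn G H : iso G H -> gn G = gn H.
Proof. by case=> f [/bij_eq_card]; rewrite !card_ord. Qed.

Lemma cnt_all init G t col : (forall v, wlcol init G t v = col) -> cnt init G t col = gn G.
Proof.
move=> H; rewrite /cnt -[RHS](card_ord (gn G)); apply: eq_card => v.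
by rewrite inE H eqxx.
Qed.

Lemma cnt_none init G t col : (forall v, wlcol init G t v != col) -> cnt init G t col = 0.
Proof.
move=> H; rewrite /cnt; apply: eq_card0 => v.
by rewrite inE (negbTE (H v)).
Qed.

Definition K3 : graph.
Proof.
refine (@Graph 3 (fun a b => a != b) _ _).
- by move=> x y; rewrite eq_sym.
- by move=> x; rewrite /= eqxx.
Defined.

Definition K22 : graph.
Proof.
refine (@Graph 4 (fun a b => odd a != odd b) _ _).
- by move=> x y; rewrite eq_sym.
- by move=> x; rewrite /= eqxx.
Defined.

Definition TK3 : graph.
Proof.
refine (@Graph 6 (fun a b => (a != b) && ((a < 3) == (b < 3))) _ _).
- by move=> x y; rewrite eq_sym [(y < 3) == _]eq_sym.
- by move=> x; rewrite /= eqxx.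
Defined.

Lemma reg_K3 v : size (@nbrs K3 v) = 2.
Proof. apply/eqP; move: v; rewrite /nbrs /= !enum_ordSl enum_ord0; case=> m Hm; do 3?[case: m Hm => [|m] Hm]; by vm_compute. Qed.
Lemma reg_K22 v : size (@nbrs K22 v) = 2.
Proof. apply/eqP; move: v; rewrite /nbrs /= !enum_ordSl enum_ord0; case=> m Hm; do 4?[case: m Hm => [|m] Hm]; by vm_compute. Qed.
Lemma reg_TK3 v : size (@nbrs TK3 v) = 2.
Proof. apply/eqP; move: v; rewrite /nbrs /= !enum_ordSl enum_ord0; case=> m Hm; do 6?[case: m Hm => [|m] Hm]; by vm_compute. Qed.

Lemma ell_K3 v : ellF K3 K3 v.
Proof.
apply/existsP; exists [ffun i : 'I_3 => (i : 'I_(gn K3))].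
apply/and3P; split.
- by apply/injectiveP => a b; rewrite !ffunE.
- by apply/codomP; exists v; rewrite ffunE.
- by apply/forallP => a; apply/forallP => b; rewrite !ffunE.
Qed.

Lemma ell_K22 v : ellF K3 K22 v = false.
Proof.
apply/negbTE/existsP => -[f /and3P [_ _ /forallP H]].
have h01 := H ord0; move/forallP: h01 => h01.
have h1 := H (Ordinal (isT : 1 < 3)); move/forallP: h1 => h1.
move: (h01 (Ordinal (isT : 1 < 3))) (h01 (Ordinal (isT : 2 < 3))) (h1 (Ordinal (isT : 2 < 3))).
rewrite /=.
by case: (odd (f ord0)); case: (odd (f (Ordinal (isT : 1 < 3))));
   case: (odd (f (Ordinal (isT : 2 < 3)))).
Qed.

Lemma emb_lt (b : bool) (i : 'I_3) : i + 3 * b < 6.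
Proof. have := ltn_ord i; case: b => /=; lia. Qed.

Lemma ell_TK3 v : ellF K3 TK3 v.
Proof.
set b := 3 <= v.
apply/existsP; exists [ffun i : 'I_3 => (Ordinal (emb_lt b i) : 'I_(gn TK3))].
apply/and3P; split.
- by apply/injectiveP => x y; rewrite !ffunE => /(congr1 val) /= /addIn/val_inj.
- apply/codomP.
  have Hv : v - 3 * b < 3 by have := ltn_ord v; rewrite /b; case: leqP => /=; lia.
  exists (Ordinal Hv); rewrite ffunE; apply: val_inj => /=.
  by have := ltn_ord v; rewrite /b; case: leqP => /=; lia.
- apply/forallP => x; apply/forallP => y; rewrite !ffunE /=.
  have -> : ((x + 3 * b < 3) == (y + 3 * b < 3)) = true.
    by case: b; rewrite /= ?muln1 ?muln0 ?addn0 ?ltn_ord // ?addn3 ?ltnS ?ltnNge ?leq_addl.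
  have -> : (Ordinal (emb_lt b x) == Ordinal (emb_lt b y) :> 'I_6) = (x == y).
    by rewrite -val_eqE /= eqn_add2r.
  by rewrite andbT eqxx.
Qed.

Definition SS := [:: K3; K22; TK3].
Definition cc (G : graph) := gn G != 4.

Lemma wl_S G : (forall v, size (@nbrs G v) = 2) -> forall t v, wlcol init_WL G t v = fcol 0 2 t.
Proof. by move=> H; apply: const_col. Qed.

Lemma colors_WL t : colors init_WL SS t = [:: fcol 0 2 t].
Proof.
rewrite /colors /=.
rewrite (map_enum_cst (wl_S reg_K3 t)) (map_enum_cst (wl_S reg_K22 t)) (map_enum_cst (wl_S reg_TK3 t)).
move: (fcol 0 2 t) => g.
change (undup [:: g;g;g;g;g;g;g;g;g;g;g;g;g] = [:: g]).
by rewrite /= !inE eqxx.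
Qed.

Definition A0 := pickle [:: true].
Definition B0 := pickle [:: false].
Lemma A0B0 : (A0 == B0) = false.
Proof. by apply/negbTE/eqP => /(pcan_inj pickleK). Qed.

Lemma colors_WLF : colors (init_WLF [:: K3]) SS 0 = [:: B0; A0].
Proof.
rewrite /colors /=.
rewrite (@map_enum_cst K3 _ A0); last by move=> v; rewrite /init_WLF /= ell_K3.
rewrite (@map_enum_cst K22 _ B0); last by move=> v; rewrite /init_WLF /= ell_K22.
rewrite (@map_enum_cst TK3 _ A0); last by move=> v; rewrite /init_WLF /= ell_TK3.
change (undup [:: A0;A0;A0;B0;B0;B0;B0;A0;A0;A0;A0;A0;A0] = [:: B0;A0]).
by [].
Qed.

Section Real.
Variable R : realType.
Local Open Scope ring_scope.

Lemma flatten1 (T : Type) (f : nat -> T) s : flatten [seq [:: f t] | t <- s] = [seq f t | t <- s].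
Proof. by elim: s => //= a s ->. Qed.

Definition ones T : seq R := [seq 1 | _ <- iota 0 T.+1].

Lemma phiT_WL G T : (forall v, size (@nbrs G v) = 2) ->
  @phiT R init_WL SS T G = [seq (gn G)%:R * a | a <- ones T].
Proof.
move=> Hr; rewrite /phiT /phi.
rewrite (eq_map (g := fun t => [:: ((gn G)%:R : R)])); last first.
  by move=> t; rewrite colors_WL /= (cnt_all (wl_S Hr t)).
by rewrite flatten1 -map_comp; apply: eq_map => t /=; rewrite mulr1.
Qed.

Lemma dot_scale w (k : R) u : dot w [seq k * a | a <- u] = k * dot w u.
Proof.
rewrite /dot size_map mulr_sumr; apply: eq_bigr => i _.
by rewrite (nth_map 0) // mulrCA.
Qed.

Lemma enorm_scale (k : R) u : 0 < k -> enorm [seq k * a | a <- u] = k * enorm u.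
Proof.
move=> k0; rewrite /enorm big_map.
under eq_bigr => a _ do rewrite exprMn.
by rewrite -mulr_sumr sqrtrM ?sqr_ge0 // sqrtr_sqr gtr0_norm.
Qed.

Lemma normalize_scale (k : R) u : 0 < k -> normalize [seq k * a | a <- u] = normalize u.
Proof.
move=> k0; rewrite /normalize enorm_scale // -map_comp; apply: eq_map => a /=.
by rewrite invfM mulrACA mulfV ?gt_eqF // mul1r.
Qed.

Lemma phiT_WLF G T :
  exists r, @phiT R (init_WLF [:: K3]) SS T G = ((cnt (init_WLF [:: K3]) G 0 B0)%:R) :: r.
Proof. by rewrite /phiT /= /phi colors_WLF /=; eexists. Qed.

Lemma dot_w (x : seq R) : (0 < size x)%N -> dot [:: -1] x = - x`_0.
Proof.
case: x => // a x _; rewrite /dot /= big_ord_recl /= big1 ?addr0 ?mulN1r //.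
by move=> i _; rewrite nth_nil mul0r.
Qed.

Lemma enorm_pos (a : R) (x : seq R) : a != 0 -> 0 < enorm (a :: x).
Proof.
move=> a0; rewrite /enorm sqrtr_gt0 big_cons.
have h1 : 0 < a ^+ 2 by rewrite lt_neqAle eq_sym sqrf_eq0 a0 sqr_ge0.
have h2 : 0 <= \sum_(i <- x) i ^+ 2 by apply: sumr_ge0 => i _; rewrite sqr_ge0.
lra.
Qed.

End Real.

Lemma sampleP (R : realType) (f : graph -> seq R) : linsep (sample f SS cc) ->
  exists w b, [/\ (0 < dot w (f K3) + b)%R, (dot w (f K22) + b < 0)%R & (0 < dot w (f TK3) + b)%R].
Proof.
case=> w [b H]; exists w, b; split.
- exact: (H (f K3, cc K3) (mem_head _ _)).
- by apply: (H (f K22, cc K22)); rewrite !inE eqxx orbT.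
- by apply: (H (f TK3, cc TK3)); rewrite !inE eqxx !orbT.
Qed.

Lemma cntB_K3 : cnt (init_WLF [:: K3]) K3 0 B0 = 0%N.
Proof. by apply: cnt_none => v; rewrite /= /init_WLF /= ell_K3 -/A0 A0B0. Qed.
Lemma cntB_TK3 : cnt (init_WLF [:: K3]) TK3 0 B0 = 0%N.
Proof. by apply: cnt_none => v; rewrite /= /init_WLF /= ell_TK3 -/A0 A0B0. Qed.
Lemma cntB_K22 : cnt (init_WLF [:: K3]) K22 0 B0 = 4%N.
Proof. by apply: cnt_all => v; rewrite /= /init_WLF /= ell_K22. Qed.

Theorem proposition12 (R : realType) (n : nat) : (10 <= n)%N ->
  exists (S : seq graph) (c : graph -> bool) (F : graph),
    (forall i, (i < size S)%N -> (gn (nth F S i) <= n)%N) /\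
    (forall i j, (i < size S)%N -> (j < size S)%N -> i <> j ->
        ~ iso (nth F S i) (nth F S j)) /\
    (forall i j, (i < size S)%N -> (j < size S)%N -> i <> j ->
        wl_dist1 (nth F S i) (nth F S j)) /\
    (forall T : nat,
        ~ linsep (sample (fun G => normalize (@phiT R init_WL S T G)) S c) /\
        linsep (sample (fun G => normalize (@phiT R (init_WLF [:: F]) S T G)) S c) /\
        ~ linsep (sample (fun G => @phiT R init_WL S T G) S c) /\
        linsep (sample (fun G => @phiT R (init_WLF [:: F]) S T G) S c)).
Proof.
move=> n10; exists SS, cc, K3; split; [|split; [|split]].
- by case=> [|[|[|i]]] //= _; lia.
- by case=> [|[|[|i]]] [|[|[|j]]] //= _ _ _ /iso_gn.
- move=> i j hi hj hij; exists 0%N, 0%N; split => //.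
  rewrite !cnt_all //.
  by move: hi hj hij; case: i => [|[|[|i]]]; case: j => [|[|[|j]]].
move=> T; split; [|split; [|split]].
- move/sampleP => [w [b [h1 h2 h3]]]; move: h1 h2.
  rewrite (phiT_WL _ T reg_K3) (phiT_WL _ T reg_K22) !normalize_scale ?ltr0Sn //.
  lra.
- set y := ((4%:R : R) / enorm (@phiT R (init_WLF [:: K3]) SS T K22))%R.
  have y0 : (0 < y)%R.
    rewrite divr_gt0 ?ltr0Sn //.
    by case: (phiT_WLF R K22 T) => r ->; rewrite cntB_K22 enorm_pos // pnatr_eq0.
  exists [:: (-1)%R], (y / 2)%R => p; rewrite !inE => /or3P [] /eqP -> /=.
  + case: (phiT_WLF R K3 T) => r ->; rewrite dot_w //= cntB_K3 mul0r; lra.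
  + move: y0; rewrite /y; case: (phiT_WLF R K22 T) => r ->; rewrite dot_w //= cntB_K22.
    lra.
  + case: (phiT_WLF R TK3 T) => r ->; rewrite dot_w //= cntB_TK3 mul0r; lra.
- move/sampleP => [w [b [h1 h2 h3]]]; move: h1 h2 h3.
  rewrite (phiT_WL _ T reg_K3) (phiT_WL _ T reg_K22) (phiT_WL _ T reg_TK3) !dot_scale.
  rewrite [gn K3]/= [gn K22]/= [gn TK3]/=; lra.
- exists [:: (-1)%R], 1%R => p; rewrite !inE => /or3P [] /eqP -> /=.
  + case: (phiT_WLF R K3 T) => r ->; rewrite dot_w //= cntB_K3; lra.
  + case: (phiT_WLF R K22 T) => r ->; rewrite dot_w //= cntB_K22; lra.
  + case: (phiT_WLF R TK3 T) => r ->; rewrite dot_w //= cntB_TK3; lra.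
Qed.
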